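(* Let $H_0$ be a bounded operator on a Hilbert space with $\|H_0\|=1$, finite-dimensional kernel, and a bounded reflexive generalized inverse. Let $\mathcal{S}$ be a set of bounded operators of unit norm (the perturbations in the symmetry class). Then $\mathrm{Ker}\,H_0$ is stable against every $w\in\mathcal{S}$ if and only if for every $w\in\mathcal{S}$ there is $\lambda_0>0$ such that $\dim\mathrm{Ker}(H_0+\lambda w)=\dim\mathrm{Ker}\,H_0$ for all real $\lambda$ with $|\lambda|<\lambda_0$.
   Context: A reflexive generalized inverse of $H_0$ is an operator $H_0^{(-1)}$ with $H_0^{(-1)}H_0H_0^{(-1)}=H_0^{(-1)}$ and $H_0H_0^{(-1)}H_0=H_0$. For a closed subspace $\mathcal{V}$, $P_{\mathcal{V}}$ is the orthogonal projector onto it. $\mathrm{Ker}\,H_0$ is stable against a perturbation $w$ if $\lim_{\lambda\to0,\lambda\in\mathbb{R}}P_{\mathrm{Ker}(H_0+\lambda w)}=P_{\mathrm{Ker}H_0}$ in operator norm. *)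

(* Defs.v *)
From HB Require Import structures.
From mathcomp Require Import all_boot all_order all_algebra.
From mathcomp Require Import all_classical all_reals all_analysis.
From mathcomp Require Import complex.
Set Implicit Arguments. Unset Strict Implicit. Unset Printing Implicit Defensive.
Import Order.TTheory GRing.Theory Num.Theory numFieldNormedType.Exports.
Local Open Scope classical_set_scope.
Local Open Scope ring_scope.
Local Open Scope complex_scope.

Section Hilbert.
Variables (R : realType) (V : lmodType R[i]) (ip : V -> V -> R[i]).

Definition hnorm (x : V) : R := Num.sqrt (complex.Re (ip x x)).

Definition is_hilbert : Prop :=
  [/\ (forall a x y z, ip (a *: x + y) z = a * ip x z + ip y z),
      (forall x y, ip y x = (ip x y)^*),
      (forall x, 0 <= ip x x),
      (forall x, ip x x = 0 -> x = 0) &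
      (forall u : nat -> V,
         (forall e : R, 0 < e -> exists N, forall m n, (N <= m)%N -> (N <= n)%N ->
              hnorm (u m - u n) < e) ->
         exists l, forall e : R, 0 < e -> exists N, forall n, (N <= n)%N ->
              hnorm (u n - l) < e)].

Definition bounded_op (A : V -> V) : Prop :=
  (forall a x y, A (a *: x + y) = a *: A x + A y) /\
  (exists M : R, forall x, hnorm (A x) <= M * hnorm x).

Definition opnorm (A : V -> V) : R :=
  sup [set hnorm (A x) | x in [set x | hnorm x <= 1]].

Definition Ker (A : V -> V) : set V := [set x | A x = 0].

Definition is_orth_proj (S : set V) (P : V -> V) : Prop :=
  forall x, S (P x) /\ (forall y, S y -> ip (x - P x) y = 0).

Definition has_dim (S : set V) (n : nat) : Prop :=
  exists b : 'I_n -> V,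
    [/\ (forall i, S (b i)),
        (forall c : 'I_n -> R[i], \sum_i c i *: b i = 0 -> forall i, c i = 0) &
        (forall x, S x -> exists c : 'I_n -> R[i], x = \sum_i c i *: b i)].

Definition finite_dim (S : set V) : Prop := exists n, has_dim S n.

Definition same_dim (S1 S2 : set V) : Prop := exists n, has_dim S1 n /\ has_dim S2 n.

Definition pert (H0 w : V -> V) (l : R) : V -> V := fun x => H0 x + l%:C *: w x.

Definition refl_ginv (H0 G : V -> V) : Prop :=
  (forall x, G (H0 (G x)) = G x) /\ (forall x, H0 (G (H0 x)) = H0 x).

(* Ker H0 is stable against w: P_{Ker(H0 + l w)} -> P_{Ker H0} in operator norm
   as l -> 0 (l real).  P is any choice of the orthogonal projectors (they are unique). *)
Definition ker_stable (H0 w : V -> V) : Prop :=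
  forall P : R -> V -> V,
    (forall l, is_orth_proj (Ker (pert H0 w l)) (P l)) ->
    is_orth_proj (Ker H0) (P 0) ->
    (fun l => opnorm (fun x => P l x - P 0 x)) @ (0 : R)^' --> (0 : R).

End Hilbert.

(* Main.v *)
Require Import Defs.
From HB Require Import structures.
From mathcomp Require Import all_boot all_order all_algebra.
From mathcomp Require Import all_classical all_reals all_analysis.
From mathcomp Require Import complex.
From mathcomp Require Import ring lra.
Set Implicit Arguments. Unset Strict Implicit. Unset Printing Implicit Defensive.
Import Order.TTheory GRing.Theory Num.Theory numFieldNormedType.Exports.
Local Open Scope classical_set_scope.
Local Open Scope ring_scope.

Section Basic.
Local Open Scope complex_scope.
Variables (R : realType) (V : lmodType R[i]) (ip : V -> V -> R[i]).
Hypothesis HH : is_hilbert ip.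

Lemma ipl a x y z : ip (a *: x + y) z = a * ip x z + ip y z.
Proof. by case: HH => h _ _ _ _; apply: h. Qed.
Lemma ipc x y : ip y x = (ip x y)^*.
Proof. by case: HH => _ h _ _ _; apply: h. Qed.
Lemma ipp x : 0 <= ip x x.
Proof. by case: HH => _ _ h _ _; apply: h. Qed.
Lemma ip0 x : ip x x = 0 -> x = 0.
Proof. by case: HH => _ _ _ h _; apply: h. Qed.

Lemma ip0l z : ip 0 z = 0.
Proof.
have := ipl 1 0 0 z; rewrite scaler0 addr0 mul1r => /eqP.
by rewrite -subr_eq0 opprD addrA subrr sub0r oppr_eq0 => /eqP.
Qed.
Lemma ipDl x y z : ip (x + y) z = ip x z + ip y z.
Proof. by rewrite -[x]scale1r ipl mul1r scale1r. Qed.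
Lemma ipZl a x z : ip (a *: x) z = a * ip x z.
Proof. by rewrite -[a *: x]addr0 ipl ip0l addr0. Qed.
Lemma ipNl x z : ip (- x) z = - ip x z.
Proof. by rewrite -scaleN1r ipZl mulN1r. Qed.
Lemma ipBl x y z : ip (x - y) z = ip x z - ip y z.
Proof. by rewrite ipDl ipNl. Qed.
Lemma ipDr x y z : ip z (x + y) = ip z x + ip z y.
Proof. by rewrite !(ipc _ z) ipDl rmorphD. Qed.
Lemma ipZr a x z : ip z (a *: x) = a^* * ip z x.
Proof. by rewrite !(ipc _ z) ipZl rmorphM. Qed.
Lemma ipNr x z : ip z (- x) = - ip z x.
Proof. by rewrite !(ipc _ z) ipNl rmorphN. Qed.
Lemma ipBr x y z : ip z (x - y) = ip z x - ip z y.
Proof. by rewrite ipDr ipNr. Qed.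
Lemma ip0r z : ip z 0 = 0.
Proof. by rewrite -(subrr z) ipBr subrr. Qed.

Definition re x y := complex.Re (ip x y).
Definition nn x := re x x.

Lemma ReM_real (t : R) (z : R[i]) : complex.Re (t%:C * z) = t * complex.Re z.
Proof. by case: z => a b /=; rewrite mul0r subr0. Qed.
Lemma ImM_real (t : R) (z : R[i]) : complex.Im (t%:C * z) = t * complex.Im z.
Proof. by case: z => a b /=; rewrite mul0r addr0. Qed.
Lemma ReD (a b : R[i]) : complex.Re (a + b) = complex.Re a + complex.Re b.
Proof. by case: a; case: b. Qed.
Lemma ReN (a : R[i]) : complex.Re (- a) = - complex.Re a.
Proof. by case: a. Qed.
Lemma ReJ (a : R[i]) : complex.Re (a^*) = complex.Re a.
Proof. by case: a. Qed.

Lemma reDl x y z : re (x + y) z = re x z + re y z.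
Proof. by rewrite /re ipDl ReD. Qed.
Lemma reNl x z : re (- x) z = - re x z.
Proof. by rewrite /re ipNl ReN. Qed.
Lemma reBl x y z : re (x - y) z = re x z - re y z.
Proof. by rewrite reDl reNl. Qed.
Lemma reC x y : re x y = re y x.
Proof. by rewrite /re ipc ReJ. Qed.
Lemma reDr x y z : re z (x + y) = re z x + re z y.
Proof. by rewrite reC reDl !(reC z). Qed.
Lemma reNr x z : re z (- x) = - re z x.
Proof. by rewrite reC reNl reC. Qed.
Lemma reBr x y z : re z (x - y) = re z x - re z y.
Proof. by rewrite reDr reNr. Qed.
Lemma reZl (t : R) x z : re (t%:C *: x) z = t * re x z.
Proof. by rewrite /re ipZl ReM_real. Qed.
Lemma reZr (t : R) x z : re z (t%:C *: x) = t * re z x.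
Proof. by rewrite reC reZl reC. Qed.
Lemma re0l z : re 0 z = 0.
Proof. by rewrite /re ip0l. Qed.
Lemma re0r z : re z 0 = 0.
Proof. by rewrite /re ip0r. Qed.

Lemma nn_ge0 x : 0 <= nn x.
Proof. by have := ipp x; rewrite lecE /= => /andP[]. Qed.
Lemma ipxx x : ip x x = (nn x)%:C.
Proof.
have := ipp x; rewrite lecE /nn /re; case: (ip x x) => a b /= /andP[/eqP -> _] //.
Qed.
Lemma nn0 x : nn x = 0 -> x = 0.
Proof. by move=> h; apply: ip0; rewrite ipxx h. Qed.

Lemma nnD x y : nn (x + y) = nn x + 2 * re x y + nn y.
Proof. rewrite /nn reDl !reDr (reC y x); ring. Qed.
Lemma nnB x y : nn (x - y) = nn x - 2 * re x y + nn y.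
Proof. rewrite /nn reBl !reBr (reC y x); ring. Qed.
Lemma nnZ (t : R) x : nn (t%:C *: x) = t ^+ 2 * nn x.
Proof. by rewrite /nn reZl reZr mulrA expr2. Qed.
Lemma nnN x : nn (- x) = nn x.
Proof. by rewrite /nn reNl reNr opprK. Qed.

Notation hn := (hnorm ip).
Lemma hnE x : hn x = Num.sqrt (nn x). Proof. by []. Qed.
Lemma hn_ge0 x : 0 <= hn x. Proof. exact: sqrtr_ge0. Qed.
Lemma hn2 x : hn x ^+ 2 = nn x.
Proof. by rewrite hnE sqr_sqrtr // nn_ge0. Qed.
Lemma hn0 x : hn x = 0 -> x = 0.
Proof. by move=> h; apply: nn0; rewrite -hn2 h expr0n. Qed.
Lemma hn_zero : hn 0 = 0.
Proof. by rewrite hnE /nn re0l sqrtr0. Qed.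
Lemma hnN x : hn (- x) = hn x.
Proof. by rewrite !hnE nnN. Qed.
Lemma hnZ (t : R) x : hn (t%:C *: x) = `|t| * hn x.
Proof. by rewrite !hnE nnZ sqrtrM ?sqrtr_sqr // sqr_ge0. Qed.

Lemma le_sq (a b : R) : 0 <= b -> a ^+ 2 <= b ^+ 2 -> a <= b.
Proof.
move=> b0 h.
have : `|a| <= b by rewrite -ler_sqr ?nnegrE ?normr_ge0 // real_normK ?num_real.
by apply: le_trans; apply: ler_norm.
Qed.

Lemma CS x y : re x y <= hn x * hn y.
Proof.
apply: le_sq; first by rewrite mulr_ge0 ?hn_ge0.
rewrite exprMn !hn2.
have key : forall t : R, 0 <= nn x + 2 * t * re x y + t ^+ 2 * nn y.
  move=> t; have := nn_ge0 (x + t%:C *: y).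
  by rewrite nnD nnZ reZr mulrA.
have [y0|ny0] := eqVneq (nn y) 0.
  rewrite y0 mulr0.
  have [r0|r0] := eqVneq (re x y) 0; first by rewrite r0 expr0n.
  have := key (- (nn x + 1) / (2 * re x y)); rewrite y0 mulr0 addr0.
  have -> : 2 * (- (nn x + 1) / (2 * re x y)) * re x y = - (nn x + 1).
    by field; rewrite r0.
  lra.
have yp : 0 < nn y by rewrite lt_def ny0 nn_ge0.
have := key (- re x y / nn y).
have -> : nn x + 2 * (- re x y / nn y) * re x y + (- re x y / nn y) ^+ 2 * nn y
   = nn x - re x y ^+ 2 / nn y.
  by field; rewrite ny0.
rewrite subr_ge0 ler_pdivrMr //.
Qed.


Lemma CSN x y : - re x y <= hn x * hn y.
Proof. by rewrite -reNl -(hnN x) CS. Qed.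
Lemma hnD x y : hn (x + y) <= hn x + hn y.
Proof.
apply: le_sq; first by rewrite addr_ge0 ?hn_ge0.
rewrite hn2 nnD sqrrD !hn2; have := CS x y; lra.
Qed.
Lemma hnB x y : hn (x - y) <= hn x + hn y.
Proof. by rewrite -(hnN y) hnD. Qed.
Lemma hn_sub x y : hn x - hn y <= hn (x - y).
Proof. have := hnD (x - y) y; rewrite subrK; lra. Qed.
Lemma hnBC x y : hn (x - y) = hn (y - x).
Proof. by rewrite -hnN opprB. Qed.
Lemma nn_pyth u v : re u v = 0 -> nn (u + v) = nn u + nn v.
Proof. by move=> h; rewrite nnD h mulr0 addr0. Qed.

Definition linop (A : V -> V) := forall a x y, A (a *: x + y) = a *: A x + A y.
Definition subsp (S : set V) := S 0 /\ (forall a x y, S x -> S y -> S (a *: x + y)).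

Section Lin.
Variable A : V -> V.
Hypothesis hA : linop A.
Lemma lin0 : A 0 = 0.
Proof.
have := hA 1 0 0; rewrite scaler0 addr0 scale1r => /eqP.
by rewrite -subr_eq0 opprD addrA subrr sub0r oppr_eq0 => /eqP.
Qed.
Lemma linD x y : A (x + y) = A x + A y.
Proof. by have := hA 1 x y; rewrite !scale1r. Qed.
Lemma linZ a x : A (a *: x) = a *: A x.
Proof. by have := hA a x 0; rewrite !addr0 lin0 addr0. Qed.
Lemma linN x : A (- x) = - A x.
Proof. by rewrite -scaleN1r linZ scaleN1r. Qed.
Lemma linB x y : A (x - y) = A x - A y.
Proof. by rewrite linD linN. Qed.
Lemma linS n (c : 'I_n -> R[i]) (b : 'I_n -> V) :
  A (\sum_i c i *: b i) = \sum_i c i *: A (b i).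
Proof.
apply: (big_ind2 (fun u v => A u = v)) => [|u1 u2 v1 v2 <- <-|i _].
- exact: lin0.
- exact: linD.
- exact: linZ.
Qed.
Lemma Ker_subsp : subsp (Ker A).
Proof.
split; first exact: lin0.
by move=> a x y; rewrite /Ker /= hA => -> ->; rewrite scaler0 addr0.
Qed.
End Lin.

Section Sub.
Variable S : set V.
Hypothesis hS : subsp S.
Lemma sub0 : S 0. Proof. by case: hS. Qed.
Lemma subL a x y : S x -> S y -> S (a *: x + y). Proof. by case: hS => _; apply. Qed.
Lemma subD x y : S x -> S y -> S (x + y).
Proof. by move=> hx hy; have := subL 1 hx hy; rewrite scale1r. Qed.
Lemma subZ a x : S x -> S (a *: x).
Proof. by move=> hx; have := subL a hx sub0; rewrite addr0. Qed.
Lemma subN x : S x -> S (- x).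
Proof. by move=> hx; rewrite -scaleN1r; apply: subZ. Qed.
Lemma subB x y : S x -> S y -> S (x - y).
Proof. by move=> hx hy; apply: subD => //; apply: subN. Qed.
Lemma subS n (c : 'I_n -> R[i]) (b : 'I_n -> V) :
  (forall i, S (b i)) -> S (\sum_i c i *: b i).
Proof.
move=> hb; elim/big_rec: _ => [|i y _ hy]; first exact: sub0.
exact: subL.
Qed.

Variable P : V -> V.
Hypothesis hP : is_orth_proj ip S P.
Lemma projS x : S (P x). Proof. by case: (hP x). Qed.
Lemma projO x y : S y -> ip (x - P x) y = 0. Proof. by case: (hP x) => _; apply. Qed.
Lemma projOr x y : S y -> re (x - P x) y = 0. Proof. by move=> h; rewrite /re projO. Qed.
Lemma proj_uniq x p : S p -> (forall y, S y -> ip (x - p) y = 0) -> P x = p.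
Proof.
move=> hp ho; apply/eqP; rewrite -subr_eq0; apply/eqP; apply: ip0.
have e : P x - p = (x - p) - (x - P x) by rewrite opprB [RHS]addrC addrA subrK.
have hs : S (P x - p) by apply: subB => //; apply: projS.
by rewrite {1}e ipBl ho // projO // subrr.
Qed.
Lemma proj_id x : S x -> P x = x.
Proof. by move=> hx; apply: proj_uniq => // y _; rewrite subrr ip0l. Qed.
Lemma proj_lin : linop P.
Proof.
move=> a x y; apply: proj_uniq; first by apply: subL; apply: projS.
move=> z hz.
have -> : a *: x + y - (a *: P x + P y) = a *: (x - P x) + (y - P y).
  by rewrite scalerBr opprD !addrA; congr (_ + _); rewrite addrAC.
by rewrite ipl !projO // mulr0 addr0.
Qed.
Lemma proj_nn x : nn x = nn (P x) + nn (x - P x).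
Proof.
have {1}-> : x = P x + (x - P x) by rewrite addrC subrK.
by rewrite nn_pyth // reC projOr //; apply: projS.
Qed.
Lemma proj_le x : hn (P x) <= hn x.
Proof.
apply: le_sq; first exact: hn_ge0.
by rewrite !hn2 (proj_nn x) lerDl nn_ge0.
Qed.
Lemma projc_le x : hn (x - P x) <= hn x.
Proof.
apply: le_sq; first exact: hn_ge0.
by rewrite !hn2 (proj_nn x) lerDr nn_ge0.
Qed.
Lemma proj_best x s : S s -> hn (x - P x) <= hn (x - s).
Proof.
move=> hs; apply: le_sq; first exact: hn_ge0.
rewrite !hn2.
have -> : x - s = (x - P x) + (P x - s) by rewrite addrA subrK.
rewrite [X in _ <= X]nn_pyth ?lerDl ?nn_ge0 //.
by apply: projOr; apply: subB => //; apply: projS.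
Qed.
End Sub.


Lemma sum_mx_id n (c : 'rV[R[i]]_n) (M : 'I_n -> 'I_n -> R[i]) (b : 'I_n -> V) :
  \sum_j c 0 j *: (\sum_i M j i *: b i)
  = \sum_i (c *m \matrix_(j, i) M j i) 0 i *: b i.
Proof.
under eq_bigr do rewrite scaler_sumr.
rewrite exchange_big /=; apply: eq_bigr => i _.
rewrite !mxE scaler_suml; apply: eq_bigr => j _.
by rewrite mxE scalerA.
Qed.

Lemma span_indep (T : set V) n (b e : 'I_n -> V) :
  (forall x, T x -> exists c : 'I_n -> R[i], x = \sum_i c i *: b i) ->
  (forall j, T (e j)) ->
  (forall c : 'I_n -> R[i], \sum_i c i *: e i = 0 -> forall i, c i = 0) ->
  forall x, T x -> exists c : 'I_n -> R[i], x = \sum_i c i *: e i.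
Proof.
move=> hb he hind.
have [M hM] := choice (fun j => hb _ (he j)).
pose A := \matrix_(j, i) M j i.
have key : forall c : 'rV[R[i]]_n,
    \sum_j c 0 j *: e j = \sum_i (c *m A) 0 i *: b i.
  move=> c; rewrite -sum_mx_id; apply: eq_bigr => j _; by rewrite -hM.
have uA : A \in unitmx.
  rewrite -row_free_unit; apply: inj_row_free => c cA.
  apply/rowP => j; rewrite mxE; apply: (hind (fun j => c 0 j)).
  by rewrite key cA; apply: big1 => i _; rewrite mxE scale0r.
move=> x /hb [d ->].
exists (fun j => (\row_i d i *m invmx A) 0 j).
rewrite key mulmxKV //; apply: eq_bigr => i _; by rewrite mxE.
Qed.


Lemma complete (u : nat -> V) :
  (forall e : R, 0 < e -> exists N, forall m n, (N <= m)%N -> (N <= n)%N ->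
       hn (u m - u n) < e) ->
  exists l, forall e : R, 0 < e -> exists N, forall n, (N <= n)%N -> hn (u n - l) < e.
Proof. by case: HH => _ _ _ _; apply. Qed.

Lemma exists_nat (z : R) : exists N : nat, z < N%:R.
Proof.
exists (Num.bound `|z|); apply: le_lt_trans (ler_norm z) _.
exact: archi_boundP.
Qed.

Lemma half_id (v : V) : (2^-1 : R)%:C *: (v + v) = v.
Proof.
rewrite -mulr2n -(scaler_nat 2 v) scalerA.
have -> : (2^-1 : R)%:C * 2%:R = 1.
  by apply/eqP; rewrite eq_complex /=; apply/andP; split; apply/eqP; field.
by rewrite scale1r.
Qed.

Lemma quad0 (r q : R) : 0 <= q -> (forall t, 0 <= - 2 * t * r + t ^+ 2 * q) -> r = 0.
Proof.
move=> q0 h; pose t := r / (q + 1).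
have q1 : q + 1 != 0 by rewrite gt_eqF // ltr_wpDl.
have rt : r = t * (q + 1) by rewrite /t divfK.
have := h t; rewrite rt => ht.
have : t ^+ 2 * (q + 2) <= 0 by nra.
move=> h2.
have t0 : t = 0.
  apply/eqP; rewrite -sqrf_eq0 eq_le sqr_ge0 andbT.
  by rewrite -(pmulr_lle0 _ (_ : 0 < q + 2)) // ltr_wpDl.
by rewrite t0 mul0r.
Qed.

Definition closedS (S : set V) := forall (u : nat -> V) y, (forall n, S (u n)) ->
  (forall e : R, 0 < e -> exists N, forall n, (N <= n)%N -> hn (u n - y) < e) -> S y.

Lemma parallelogram a b : nn (a + b) + nn (a - b) = 2 * nn a + 2 * nn b.
Proof. rewrite nnD nnB; ring. Qed.

Lemma proj_exists (S : set V) : subsp S -> closedS S ->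
  forall x, exists p, S p /\ forall y, S y -> ip (x - p) y = 0.
Proof.
move=> hS hC x.
pose D := [set r | exists2 s, S s & r = hn (x - s)].
have D0 : D !=set0 by exists (hn (x - 0)); exists 0 => //; apply: sub0.
have Dlb : lbound D 0 by move=> r [s _ ->]; apply: hn_ge0.
set d := inf D.
have d0 : 0 <= d by apply: lb_le_inf.
have hd : forall s, S s -> d <= hn (x - s).
  by move=> s hs; apply: (ge_inf (_ : has_lbound D)); [exists 0 | exists s].
have approx : forall k : nat, exists s, S s /\ hn (x - s) < d + (k.+1%:R)^-1.
  move=> k; have lt : d < d + (k.+1%:R)^-1 by rewrite ltrDl invr_gt0 ltr0Sn.
  have [r [s hs ->] hr] := inf_lt D0 lt.
  by exists s.
have [u hu] := choice approx.
pose ek (k : nat) : R := (k.+1%:R)^-1.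
have ek0 k : 0 < ek k by rewrite /ek invr_gt0 ltr0Sn.
have ek1 k : ek k <= 1 by rewrite /ek invf_le1 ?ltr0Sn // ler1n.
have ekm k N : (N <= k)%N -> ek k <= ek N.
  by move=> h; rewrite /ek lef_pV2 ?posrE ?ltr0Sn // ler_nat ltnS.
have bnd : forall m n, nn (u m - u n) <= 2 * (2 * d + 1) * (ek m + ek n).
  move=> m n; pose a := x - u m; pose b := x - u n.
  pose mid := (2^-1 : R)%:C *: (u m + u n).
  have Smid : S mid by apply: (subZ hS); apply: (subD hS); [exact: (hu m).1 | exact: (hu n).1].
  have e0 : u m - u n = b - a.
    by rewrite /a /b opprB [RHS]addrC addrA subrK.
  have e1 : (2^-1 : R)%:C *: (b + a) = x - mid.
    rewrite /a /b /mid -[in RHS](half_id x) -scalerBr; congr (_ *: _).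
    by rewrite opprD addrACA [- u n + _]addrC.
  have h1 : d ^+ 2 <= nn (x - mid).
    rewrite -hn2; apply: lerXn2r; rewrite ?nnegrE ?hn_ge0 //; exact: hd.
  have h2 : nn (x - mid) = (2^-1) ^+ 2 * nn (b + a) by rewrite -e1 nnZ.
  have ha : nn a <= (d + ek m) ^+ 2.
    rewrite -hn2; apply: lerXn2r;
      [by rewrite nnegrE hn_ge0 | by rewrite nnegrE addr_ge0 // ltW | exact: ltW (hu m).2].
  have hb : nn b <= (d + ek n) ^+ 2.
    rewrite -hn2; apply: lerXn2r;
      [by rewrite nnegrE hn_ge0 | by rewrite nnegrE addr_ge0 // ltW | exact: ltW (hu n).2].
  have hp := parallelogram b a.
  rewrite e0.
  have := ek1 m; have := ek1 n; have := ek0 m; have := ek0 n.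
  move: h1 h2 ha hb hp d0; nra.
have cauchy : forall e : R, 0 < e -> exists N, forall m n, (N <= m)%N -> (N <= n)%N ->
       hn (u m - u n) < e.
  move=> e e0; have [N hN] := exists_nat (4 * (2 * d + 1) / e ^+ 2).
  have e20 : 0 < e ^+ 2 by rewrite exprn_gt0.
  move: hN; rewrite ltr_pdivrMr // => hN.
  have hN1 : ek N * N.+1%:R = 1 by rewrite /ek mulVf // pnatr_eq0.
  have hNS : N.+1%:R = N%:R + 1 :> R by rewrite -addn1 natrD.
  exists N => m n hm hn'.
  have := bnd m n; have := ekm _ _ hm; have := ekm _ _ hn'; have := ek0 N.
  have := hn_ge0 (u m - u n); rewrite -hn2.
  move: hN1 hNS hN d0 e0; set h := hn (u m - u n) => *.
  have : h ^+ 2 < e ^+ 2 by nra.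
  nra.
have [y hy] := complete cauchy.
have Sy : S y by apply: (hC u y) => // k; exact: (hu k).1.
have opt : hn (x - y) <= d.
  apply/ler_addgt0Pr => e e0.
  have e2 : 0 < e / 2 by rewrite divr_gt0.
  have [N1 hN1] := hy _ e2.
  have [N2 hN2] := exists_nat (2 / e).
  pose k := maxn N1 N2.
  have := hN1 k (leq_maxl _ _).
  have := (hu k).2.
  have : ek k <= ek N2 by apply: ekm; exact: leq_maxr.
  have hN21 : ek N2 * N2.+1%:R = 1 by rewrite /ek mulVf // pnatr_eq0.
  have hNS : N2.+1%:R = N2%:R + 1 :> R by rewrite -addn1 natrD.
  move: hN2; rewrite ltr_pdivrMr // => hN2.
  have tri : hn (x - y) <= hn (x - u k) + hn (u k - y).
    by have := hnD (x - u k) (u k - y); rewrite addrA subrK.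
  have hek : ek N2 < e / 2.
    have := ek0 N2; rewrite hNS in hN21; move: hN21 hN2; set q := ek N2 => *; nra.
  move=> h1 h2 h3; rewrite -/(ek k) in h2; lra.
have reo : forall s, S s -> re (x - y) s = 0.
  move=> s hs; apply: (quad0 (nn_ge0 s)) => t.
  have hts : S (t%:C *: s + y) by apply: (subL hS).
  have := le_trans opt (hd _ hts).
  have -> : x - (t%:C *: s + y) = (x - y) - t%:C *: s by rewrite opprD addrA addrAC.
  move/(lerXn2r 2); rewrite !nnegrE !hn_ge0 => /(_ isT isT).
  rewrite !hn2 [nn (x - y - _)]nnB nnZ reZr; lra.
exists y; split => // s hs.
have h1 := reo s hs.
have h2 := reo _ (subZ hS 'i hs).
move: h1 h2; rewrite /re ipZr.
case: (ip (x - y) s) => a b /= -> .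
have -> : 0 * 0 - -1 * b = b by ring.
by move=> ->.
Qed.

End Basic.

Lemma cvg0_of (R : realType) (f : R -> R) :
  (forall e : R, 0 < e -> exists2 d : R, 0 < d & forall l, `|l| < d -> l != 0 -> `|f l| < e) ->
  f @ (0 : R)^' --> (0 : R).
Proof.
move=> h; apply/cvgrPdist_lt => e e0.
have [d d0 hd] := h e e0.
apply/nbhs_normP; exists d => //= l /= hl hl0.
by rewrite sub0r normrN; apply: hd => //; rewrite -(normrN l) -(sub0r l).
Qed.

Lemma cvg0_to (R : realType) (f : R -> R) :
  f @ (0 : R)^' --> (0 : R) ->
  (forall e : R, 0 < e -> exists2 d : R, 0 < d & forall l, `|l| < d -> l != 0 -> `|f l| < e).
Proof.
move=> /cvgrPdist_lt h e e0.
have := h e e0 => /nbhs_normP [d d0 hd].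
exists d => // l hl hl0.
have := hd l; rewrite sub0r normrN; apply => //.
by rewrite /ball_ /= sub0r normrN.
Qed.

Section Main1.
Local Open Scope complex_scope.
Variables (R : realType) (V : lmodType R[i]) (ip : V -> V -> R[i]).
Hypothesis HH : is_hilbert ip.
Local Notation hn := (hnorm ip).

Lemma bound_pos A : bounded_op ip A -> exists K : R, 0 < K /\ forall x, hn (A x) <= K * hn x.
Proof.
case=> _ [M hM]; exists (`|M| + 1); split; first by rewrite ltr_wpDl.
move=> x; apply: le_trans (hM x) _; apply: ler_wpM2r; first exact: hn_ge0.
by apply: le_trans (ler_norm M) _; rewrite lerDl.
Qed.

Lemma ker_closed A : bounded_op ip A -> closedS ip (Ker A).
Proof.
move=> hA; have [K [K0 hK]] := bound_pos hA; have lin := hA.1.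
move=> u y hu hy; rewrite /Ker /=; apply: (hn0 HH).
apply/eqP; rewrite eq_le hn_ge0 andbT; apply/ler_addgt0Pr => e e0; rewrite add0r.
have [N hN] := hy (e / K) (divr_gt0 e0 K0).
have := hN N (leqnn N).
have -> : A y = A (y - u N) by rewrite (linB lin) (hu N) subr0.
rewrite (hnBC HH) => h; apply: le_trans (hK _) _.
have -> : e = K * (e / K) by rewrite mulrC divfK // gt_eqF.
by rewrite ler_pM2l // ltW.
Qed.

Lemma proj_fun A : bounded_op ip A -> exists P, is_orth_proj ip (Ker A) P.
Proof.
move=> hA; have := proj_exists HH (Ker_subsp hA.1) (ker_closed hA).
by case/choice => P hP; exists P => x; case: (hP x) => h1 h2; split.
Qed.

Lemma opnorm_le A (c : R) : 0 <= c -> (forall x, hn (A x) <= c * hn x) -> opnorm ip A <= c.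
Proof.
move=> c0 h; apply: ge_sup.
  by exists (hn (A 0)); exists 0 => //=; rewrite hn_zero.
move=> r [x /= hx <-]; apply: le_trans (h x) _.
by rewrite -[leRHS]mulr1 ler_wpM2l.
Qed.

Lemma opnorm_ub A (c : R) : 0 <= c -> (forall x, hn (A x) <= c * hn x) ->
  forall x, hn x <= 1 -> hn (A x) <= opnorm ip A.
Proof.
move=> c0 h x hx; apply: ub_le_sup; last by exists x.
exists c => r [y /= hy <-]; apply: le_trans (h y) _.
by rewrite -[leRHS]mulr1 ler_wpM2l.
Qed.

Lemma opnorm_ge0 A (c : R) : 0 <= c -> (forall x, hn (A x) <= c * hn x) -> 0 <= opnorm ip A.
Proof.
move=> c0 h; apply: le_trans (opnorm_ub c0 h (_ : hn 0 <= 1)); first exact: hn_ge0.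
by rewrite hn_zero.
Qed.

Lemma opnorm_pt A (c : R) : linop A -> 0 <= c -> (forall x, hn (A x) <= c * hn x) ->
  forall x, hn (A x) <= opnorm ip A * hn x.
Proof.
move=> lin c0 h x.
have [x0|xn0] := eqVneq (hn x) 0.
  by rewrite x0 mulr0 (hn0 HH x0) (lin0 lin) hn_zero.
have xp : 0 < hn x by rewrite lt_def xn0 hn_ge0.
have := opnorm_ub c0 h (_ : hn ((hn x)^-1%:C *: x) <= 1).
rewrite (linZ lin) !(hnZ HH) ger0_norm ?invr_ge0 ?hn_ge0 // mulVf // => /(_ (lexx _)).
by rewrite ler_pdivrMl // mulrC.
Qed.


Lemma core_B (T0 T1 : set V) (P0 P1 : V -> V) n (eps : R) :
  subsp T0 -> subsp T1 -> is_orth_proj ip T0 P0 -> is_orth_proj ip T1 P1 ->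
  has_dim T0 n -> has_dim T1 n -> 0 <= eps -> eps <= 2^-1 ->
  (forall x, T1 x -> hn (x - P0 x) <= eps * hn x) ->
  forall z, hn (P1 z - P0 z) <= 3 * eps * hn z.
Proof.
move=> s0 s1 hP0 hP1 [b [bT0 bind bspan]] [b' [b'T1 b'ind b'span]] e0 e1 est.
have l0 := proj_lin HH s0 hP0; have l1 := proj_lin HH s1 hP1.
have ind : forall c, \sum_i c i *: P0 (b' i) = 0 -> forall i, c i = 0.
  move=> c hc; apply: b'ind.
  set x := \sum_i c i *: b' i.
  have Tx : T1 x := subS s1 c b'T1.
  have P0x : P0 x = 0 by rewrite /x (linS l0).
  have := est x Tx; rewrite P0x subr0 => h.
  apply: (hn0 HH); have := hn_ge0 ip x => h0.
  apply/eqP; rewrite eq_le h0 andbT; nra.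
have surj : forall y, T0 y -> exists x, T1 x /\ y = P0 x.
  move=> y Ty; have [c ->] := span_indep bspan (fun j => projS hP0 (b' j)) ind Ty.
  exists (\sum_i c i *: b' i); split; first exact: subS.
  by rewrite (linS l0).
have back : forall y, T0 y -> hn (y - P1 y) <= 2 * eps * hn y.
  move=> y Ty; have [x [Tx ->]] := surj y Ty.
  have h1 := est x Tx.
  have h2 : hn x <= hn (P0 x) + hn (x - P0 x).
    by have := hnD HH (P0 x) (x - P0 x); rewrite addrC subrK.
  have h3 := proj_best HH s1 hP1 (P0 x) Tx.
  rewrite [X in _ <= X](hnBC HH) in h3.
  have ha : hn x <= 2 * hn (P0 x).
    have := hn_ge0 ip x; move: h1 h2; set a := hn x; set q := hn _ => *; nra.
  have : eps * hn x <= eps * (2 * hn (P0 x)) by apply: ler_wpM2l.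
  lra.
have h5 : forall z, hn (P0 (z - P1 z)) <= 2 * eps * hn (z - P1 z).
  move=> z; set u := z - P1 z; set v := P0 u.
  have Tv : T0 v := projS hP0 u.
  have o1 : re ip (u - v) v = 0 := projOr hP0 u Tv.
  have o2 : re ip u (P1 v) = 0 := projOr hP1 z (projS hP1 v).
  have nv : nn ip v = re ip u (v - P1 v).
    rewrite (reBr HH) o2 subr0; move: o1; rewrite (reBl HH) /nn; lra.
  have cs := CS HH u (v - P1 v).
  have b4 := back v Tv.
  have hv := hn2 HH v; have := hn_ge0 ip v; have := hn_ge0 ip u.
  rewrite -nv in cs; rewrite -hv in cs.
  have : hn v ^+ 2 <= hn u * (2 * eps * hn v).
    by apply: le_trans cs _; apply: ler_wpM2l => //; exact: hn_ge0.
  move=> h; have k0 : 0 <= 2 * eps * hn u by rewrite !mulr_ge0 ?hn_ge0.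
  have eqr : hn u * (2 * eps * hn v) = (2 * eps * hn u) * hn v by ring.
  have h' : hn v ^+ 2 <= (2 * eps * hn u) * hn v by rewrite -eqr.
  have := hn_ge0 ip v; move: h' k0.
  move: (hn v) (2 * eps * hn u) => a k; nra.
move=> z.
have e : P1 z - P0 z = (P1 z - P0 (P1 z)) - P0 (z - P1 z).
  by rewrite (linB l0) opprB addrA subrK.
rewrite e; apply: le_trans (hnB HH _ _) _.
have := est _ (projS hP1 z); have := h5 z; have := proj_le HH hP1 z.
have := projc_le HH hP1 z; have := hn_ge0 ip z; have := hn_ge0 ip (P1 z).
have := hn_ge0 ip (z - P1 z); nra.
Qed.


Lemma core_A (T0 T1 : set V) (P0 P1 : V -> V) n :
  subsp T0 -> subsp T1 -> is_orth_proj ip T0 P0 -> is_orth_proj ip T1 P1 ->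
  has_dim T0 n -> (forall z, hn (P1 z - P0 z) <= 2^-1 * hn z) -> has_dim T1 n.
Proof.
move=> s0 s1 hP0 hP1 [b [bT0 bind bspan]] hz.
have l0 := proj_lin HH s0 hP0; have l1 := proj_lin HH s1 hP1.
have inj0 : forall x, T1 x -> P0 x = 0 -> x = 0.
  move=> x Tx h; have := hz x; rewrite (proj_id HH s1 hP1 Tx) h subr0 => h'.
  apply: (hn0 HH); apply/eqP; rewrite eq_le hn_ge0 andbT; have := hn_ge0 ip x; lra.
have inj1 : forall y, T0 y -> P1 y = 0 -> y = 0.
  move=> y Ty h; have := hz y; rewrite (proj_id HH s0 hP0 Ty) h sub0r (hnN HH) => h'.
  apply: (hn0 HH); apply/eqP; rewrite eq_le hn_ge0 andbT; have := hn_ge0 ip y; lra.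
have ind : forall c, \sum_i c i *: P0 (P1 (b i)) = 0 -> forall i, c i = 0.
  move=> c hc; apply: bind; apply: inj1; first exact: (subS s0).
  apply: inj0; first exact: (projS hP1).
  by rewrite (linS l1) (linS l0).
exists (fun i => P1 (b i)); split.
- move=> i; exact: (projS hP1).
- move=> c hc; apply: bind; apply: inj1; first exact: (subS s0).
  by rewrite (linS l1).
- move=> x Tx.
  have [c hc] := span_indep bspan (fun j => projS hP0 (P1 (b j))) ind (projS hP0 x).
  exists c; apply/eqP; rewrite -subr_eq0; apply/eqP; apply: inj0.
    by apply: (subB s1 Tx); apply: (subS s1) => i; exact: (projS hP1).
  by rewrite (linB l0) (linS l0) hc subrr.
Qed.


Lemma linop_sub (A B : V -> V) : linop A -> linop B -> linop (fun x => A x - B x).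
Proof.
move=> hA hB a x y; rewrite hA hB scalerBr opprD !addrA; congr (_ + _).
by rewrite addrAC.
Qed.

Lemma diff_bnd (S0 S1 : set V) P0 P1 : is_orth_proj ip S0 P0 -> is_orth_proj ip S1 P1 ->
  forall x, hn (P1 x - P0 x) <= 2 * hn x.
Proof.
move=> h0 h1 x; apply: le_trans (hnB HH _ _) _.
have := proj_le HH h0 x; have := proj_le HH h1 x; lra.
Qed.

Section Ops.
Variables (H0 w G : V -> V).
Hypotheses (bH0 : bounded_op ip H0) (bw : bounded_op ip w) (bG : bounded_op ip G)
  (hG : refl_ginv H0 G).

Lemma pert_lin l : linop (pert H0 w l).
Proof.
move=> a x y; rewrite /pert bH0.1 bw.1 !scalerDr !scalerA [_ * a]mulrC.
by rewrite addrACA.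
Qed.

Lemma pert_bnd l : bounded_op ip (pert H0 w l).
Proof.
split; first exact: pert_lin.
have [K1 [K10 h1]] := bound_pos bH0; have [K2 [K20 h2]] := bound_pos bw.
exists (K1 + `|l| * K2) => x; rewrite /pert.
apply: le_trans (hnD HH _ _) _; rewrite (hnZ HH).
have := h1 x; have := h2 x; have := normr_ge0 l; have := hn_ge0 ip (w x); nra.
Qed.

Lemma ker_pert0 : Ker (pert H0 w 0) = Ker H0.
Proof.
by apply/funext => x; rewrite /Ker /pert /= rmorph0 scale0r addr0.
Qed.

Lemma est : exists C : R, 0 < C /\ forall P0, is_orth_proj ip (Ker H0) P0 ->
  forall l x, Ker (pert H0 w l) x -> hn (x - P0 x) <= C * `|l| * hn x.
Proof.
have [KG [KG0 hKG]] := bound_pos bG; have [Kw [Kw0 hKw]] := bound_pos bw.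
exists (KG * Kw); split; first exact: mulr_gt0.
move=> P0 hP0 l x hx.
have hx' : H0 x = - (l%:C *: w x) by apply/eqP; rewrite -addr_eq0; apply/eqP.
have hk : Ker H0 (x - G (H0 x)).
  by rewrite /Ker /= (linB bH0.1) hG.2 subrr.
apply: le_trans (proj_best HH (Ker_subsp bH0.1) hP0 x hk) _.
have -> : x - (x - G (H0 x)) = G (H0 x) by rewrite opprB addrC subrK.
apply: le_trans (hKG _) _; rewrite hx' (hnN HH) (hnZ HH).
have := hKw x; have := normr_ge0 l; have := hn_ge0 ip (w x); have := hn_ge0 ip x.
move=> *; rewrite -!mulrA; apply: ler_wpM2l; first exact: ltW.
nra.
Qed.
End Ops.

End Main1.


Theorem mainTheorem12 (R : realType) (V : lmodType R[i]) (ip : V -> V -> R[i])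
  (H0 : V -> V) (S : set (V -> V)) :
  is_hilbert ip ->
  bounded_op ip H0 -> opnorm ip H0 = 1 ->
  finite_dim (Ker H0) ->
  (exists G : V -> V, bounded_op ip G /\ refl_ginv H0 G) ->
  (forall w, S w -> bounded_op ip w /\ opnorm ip w = 1) ->
  ((forall w, S w -> ker_stable ip H0 w) <->
   (forall w, S w -> exists l0 : R, 0 < l0 /\
      forall l : R, `|l| < l0 -> same_dim (Ker (pert H0 w l)) (Ker H0))).
Proof.
move=> HH bH0 _ [n hn] [G [bG hG]] hS; split.
- move=> hst w Sw; have bw := (hS w Sw).1.
  have hP : forall l, exists P, is_orth_proj ip (Ker (pert H0 w l)) P.
    by move=> l; apply: (proj_fun HH); apply: pert_bnd.
  have [P hPl] := choice hP.
  have hP0 : is_orth_proj ip (Ker H0) (P 0) by rewrite -(ker_pert0 H0 w); exact: hPl.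
  have h2 : 0 < (2^-1 : R) by rewrite invr_gt0.
  have [d d0 hd] := cvg0_to (hst w Sw P hPl hP0) h2.
  exists d; split => // l hl.
  exists n; split => //.
  have [->|l0] := eqVneq l 0; first by rewrite ker_pert0.
  have f := hd l hl l0.
  apply: (core_A HH (Ker_subsp bH0.1) (Ker_subsp (pert_lin bH0 bw l)) hP0 (hPl l) hn).
  move=> z.
  have lin := linop_sub (proj_lin HH (Ker_subsp (pert_lin bH0 bw l)) (hPl l))
                        (proj_lin HH (Ker_subsp bH0.1) hP0).
  apply: le_trans (opnorm_pt HH lin (_ : 0 <= 2) (diff_bnd HH hP0 (hPl l)) z) _ => //.
  apply: ler_wpM2r; first exact: hn_ge0.
  by apply: ltW; apply: le_lt_trans f; apply: ler_norm.
- move=> hd w Sw P hPl hP0.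
  have bw := (hS w Sw).1.
  have [l0 [l00 hl0]] := hd w Sw.
  have [C [C0 hC]] := est HH bH0 bw bG hG.
  apply: cvg0_of => e e0.
  exists (Num.min l0 (Num.min (2 * C)^-1 (e / (6 * C)))).
    by rewrite !lt_min l00 invr_gt0 mulr_gt0 // divr_gt0 // mulr_gt0.
  move=> l; rewrite !lt_min => /and3P[hl1 hl2 hl3] ln0.
  have [m [dl d0]] := hl0 l hl1.
  move: hl2; rewrite -[X in _ < X]div1r ltr_pdivlMr ?mulr_gt0 // => hl2.
  move: hl3; rewrite ltr_pdivlMr ?mulr_gt0 // => hl3.
  have eps0 : 0 <= C * `|l| by apply: mulr_ge0; [exact: ltW | exact: normr_ge0].
  have eps1 : C * `|l| <= 2^-1.
    rewrite -[X in _ <= X]div1r ler_pdivlMr //; have := normr_ge0 l; nra.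
  have core := core_B HH (Ker_subsp bH0.1) (Ker_subsp (pert_lin bH0 bw l)) hP0 (hPl l)
     d0 dl eps0 eps1 (fun x hx => hC (P 0) hP0 l x hx).
  have le1 := opnorm_le HH (_ : 0 <= 3 * (C * `|l|)) core.
  have ge0 := opnorm_ge0 HH (_ : 0 <= 3 * (C * `|l|)) core.
  rewrite ger0_norm; last by apply: ge0; rewrite mulr_ge0.
  apply: le_lt_trans (le1 _) _; first by rewrite mulr_ge0.
  have := normr_ge0 l; nra.
Qed.
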